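(* Let $X$ be a real $n\times p$ matrix ($p<n$) of full column rank with rows $x_1^\top,\dots,x_n^\top$, let $N=\{1,\dots,n\}$, let $M\subset N$, and let $y,b^*\in\mathbb{R}^n$ and $g^*,g\in\mathbb{R}^p$ be arbitrary. Then: (i) if $|M|=k<m(X)$, then $$\|y-Xg-b^*\|_1-\|y-Xg^*-b^*\|_1\geq (2c_k-1)\|X(g-g^* )\|_1-2\sum_{i\in N\setminus M}|y_i-x_i^\top g^*-b^*_i|;$$ (ii) if $|M|=0$, then for every $b\in\mathbb{R}^n$, $$\|y-Xg-b\|_1-\|y-Xg^*-b^*\|_1\geq \|X(g-g^* )+b-b^*\|_1-2\sum_{i\in N}|y_i-b^*_i-x_i^\top g^*|.$$
   Context: For $k\in\{1,\dots,n\}$, the leverage constants of $X$ are $$c_k=c_k(X)=\min_{M\subset N,\ |M|=k}\ \min_{g\in\mathbb{R}^p,\ g\neq 0}\ \frac{\sum_{i\in N\setminus M}|x_i^\top g|}{\sum_{i\in N}|x_i^\top g|},$$ and $m(X)=\max\{k\in N : c_k(X)>1/2\}$. *)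

(* Defs.v *)
From HB Require Import structures.
From mathcomp Require Import all_boot all_order all_algebra.
From mathcomp Require Import boolp classical_sets reals.
Set Implicit Arguments. Unset Strict Implicit. Unset Printing Implicit Defensive.
Import Order.TTheory GRing.Theory Num.Theory.
Local Open Scope classical_set_scope.
Local Open Scope ring_scope.

Definition norm1 (R : realType) (n : nat) (v : 'cV[R]_n) : R :=
  \sum_(i < n) `|v i 0|.

Definition rowdot (R : realType) (n p : nat) (X : 'M[R]_(n, p)) (i : 'I_n)
  (g : 'cV[R]_p) : R := (X *m g) i 0.

(* leverage constant c_k(X): the minimum (taken as infimum; it is attained)
   over |M| = k and g <> 0 of sum_{i notin M} |x_i^T g| / sum_i |x_i^T g| *)
Definition leverage_const (R : realType) (n p : nat) (X : 'M[R]_(n, p))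
  (k : nat) : R :=
  inf [set r : R | exists (M : {set 'I_n}) (g : 'cV[R]_p),
         [/\ #|M| = k, g != 0 &
             r = (\sum_(i in ~: M) `|rowdot X i g|) /
                 (\sum_(i < n) `|rowdot X i g|)]].

(* m(X) = max { k in {1..n} : c_k(X) > 1/2 } (0 if the set is empty) *)
Definition mX (R : realType) (n p : nat) (X : 'M[R]_(n, p)) : nat :=
  \max_(k < n.+1 | (1 <= k)%N && (2^-1 < leverage_const X k)) k.

(* Main.v *)
Require Import Defs.
From HB Require Import structures.
From mathcomp Require Import all_boot all_order all_algebra.
From mathcomp Require Import boolp classical_sets reals.
From mathcomp Require Import ring lra.
Import Order.TTheory GRing.Theory Num.Theory.
Local Open Scope ring_scope.

Theorem lemma3p3 (R : realType) (n p : nat) (X : 'M[R]_(n, p))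
  (hpn : (p < n)%N) (hrank : \rank X = p)
  (M : {set 'I_n}) (y bstar : 'cV[R]_n) (gstar g : 'cV[R]_p) :
  ((#|M| < mX X)%N ->
     norm1 (y - X *m g - bstar) - norm1 (y - X *m gstar - bstar) >=
     (2 * leverage_const X #|M| - 1) * norm1 (X *m (g - gstar))
     - 2 * \sum_(i in ~: M) `|y i 0 - rowdot X i gstar - bstar i 0|) /\
  (#|M| = 0%N -> forall b : 'cV[R]_n,
     norm1 (y - X *m g - b) - norm1 (y - X *m gstar - bstar) >=
     norm1 (X *m (g - gstar) + b - bstar)
     - 2 * \sum_(i < n) `|y i 0 - bstar i 0 - rowdot X i gstar|).
Proof.
split.
- move=> _.
  set u := X *m (g - gstar).
  set c := leverage_const X #|M|.
  set S := norm1 u.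
  set U := \sum_(i in ~: M) `|u i 0|.
  have S0 : 0 <= S by apply: sumr_ge0 => i _.
  have U0 : 0 <= U by apply: sumr_ge0 => i _.
  have key : c * S <= U.
    have [gz|gne] := eqVneq (g - gstar) 0.
      have -> : S = 0.
        rewrite /S /norm1 /u gz mulmx0; apply: big1 => i _; by rewrite mxE normr0.
      by rewrite mulr0.
    have [S0'|Spos] := eqVneq S 0.
      by rewrite S0' mulr0.
    have Sp : 0 < S by rewrite lt_def Spos S0.
    have : c <= U / S.
      apply: (@ge_inf R).
        exists 0 => r [Mx [gx [_ _ ->]]].
        by apply: divr_ge0; apply: sumr_ge0.
      exists M, (g - gstar); split => //.
    by rewrite ler_pdivlMr.
  have H1 : \sum_(i < n) (2 * (if i \in ~: M then `|u i 0| else 0) - `|u i 0|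
            - 2 * (if i \in ~: M then `|y i 0 - rowdot X i gstar - bstar i 0| else 0))
          <= norm1 (y - X *m g - bstar) - norm1 (y - X *m gstar - bstar).
    rewrite /norm1 -sumrB; apply: ler_sum => i _.
    have E1 : (y - X *m g - bstar) i 0 =
       (y i 0 - rowdot X i gstar - bstar i 0) - u i 0.
      rewrite /u /rowdot mulmxBr !mxE; ring.
    have E2 : (y - X *m gstar - bstar) i 0 = y i 0 - rowdot X i gstar - bstar i 0.
      by rewrite /rowdot !mxE.
    rewrite E1 E2.
    set r := y i 0 - rowdot X i gstar - bstar i 0.
    set v : R := u i 0.
    have h1 : `|v| <= `|r - v| + `|r|.
      by rewrite (distrC r v); have := ler_normD (v - r) r; rewrite subrK.
    have h2 : `|r| <= `|r - v| + `|v|.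
      by have := ler_normD (r - v) v; rewrite subrK.
    case: (i \in ~: M) => /=.
    + have e : 2 * `|v| - `|v| - 2 * `|r| = `|v| - `|r| - `|r| by ring.
      rewrite e lerD2r lerBlDr; exact: h1.
    + have e : 2 * 0 - `|v| - 2 * 0 = - `|v| by ring.
      by rewrite e lerBrDr addrC lerBlDr.
  rewrite (big_mkcond (fun i => i \in ~: M)) /=.
  move: H1; rewrite !sumrB -!mulr_sumr -(big_mkcond (fun i => i \in ~: M)) /=.
  change (\sum_(i < n) `|u i 0|) with S.
  apply: le_trans; rewrite lerD2r mulrBl mul1r lerD2r -mulrA.
  by rewrite ler_wpM2l.
- move=> _ b.
  rewrite /norm1 -sumrB mulr_sumr -sumrB; apply: ler_sum => i _.
  set r := y i 0 - bstar i 0 - rowdot X i gstar.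
  set d := (X *m (g - gstar) + b - bstar) i 0.
  have E1 : (y - X *m g - b) i 0 = r - d.
    rewrite /r /d /rowdot mulmxBr !mxE; ring.
  have E2 : (y - X *m gstar - bstar) i 0 = r.
    rewrite /r /rowdot !mxE; ring.
  rewrite E1 E2.
  have h1 : `|d| <= `|r - d| + `|r|.
    by rewrite (distrC r d); have := ler_normD (d - r) r; rewrite subrK.
  lra.
Qed.
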